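(* Let $(H,G,\alpha,f)$ and $(H,G,\alpha',f')$ be normalized crossed systems, and write $g\triangleright' h:=\alpha'(g)(h)$. There is a bijection between the set of group homomorphisms $\psi:H\#_\alpha^f G\to H\#_{\alpha'}^{f'}G$ and the set of quadruples $(u,r,v,s)$, where $u:H\to H$, $r:G\to H$, $v:G\to G$ are maps and $s:H\to G$ is a group homomorphism, satisfying for all $g,g_1,g_2\in G$ and $h,h_1,h_2\in H$: (i) $v(g_1)v(g_2)=s(f(g_1,g_2))\,v(g_1g_2)$; (ii) $v(g)s(h)=s(g\triangleright h)\,v(g)$; (iii) $u(h_1h_2)=u(h_1)\big(s(h_1)\triangleright' u(h_2)\big)f'(s(h_1),s(h_2))$; (iv) $u(g\triangleright h)\big(s(g\triangleright h)\triangleright' r(g)\big)f'\big(s(g\triangleright h),v(g)\big)=r(g)\big(v(g)\triangleright' u(h)\big)f'(v(g),s(h))$; (v) $r(g_1)\big(v(g_1)\triangleright' r(g_2)\big)f'(v(g_1),v(g_2))=u(f(g_1,g_2))\big(s(f(g_1,g_2))\triangleright' r(g_1g_2)\big)f'\big(s(f(g_1,g_2)),v(g_1g_2)\big)$. Under this bijection, $\psi$ corresponds to $(u,r,v,s)$ via $$\psi(h,g)=(u(h),s(h))\cdot(r(g),v(g))=\Big(u(h)\big(s(h)\triangleright' r(g)\big)f'(s(h),v(g)),\ s(h)v(g)\Big),$$ and every such quadruple satisfies $u(1)=1$, $v(1)=1$, $r(1)=1$.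
   Context: For groups $H,G$ and a map $\alpha:G\to\mathrm{Aut}(H)$ write $g\triangleright h:=\alpha(g)(h)$. A normalized crossed system is a quadruple $(H,G,\alpha,f)$ with maps $\alpha:G\to\mathrm{Aut}(H)$, $f:G\times G\to H$, $f(1,1)=1$, such that for all $g_1,g_2,g_3\in G$, $h\in H$: (WA) $g_1\triangleright(g_2\triangleright h)=f(g_1,g_2)\big((g_1g_2)\triangleright h\big)f(g_1,g_2)^{-1}$ and (CC) $f(g_1,g_2)f(g_1g_2,g_3)=\big(g_1\triangleright f(g_2,g_3)\big)f(g_1,g_2g_3)$. The crossed product $H\#_\alpha^f G$ is the group on the set $H\times G$ with multiplication $(h_1,g_1)\cdot(h_2,g_2)=\big(h_1(g_1\triangleright h_2)f(g_1,g_2),g_1g_2\big)$ and unit $(1,1)$. *)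

(* Defs.v *)
Set Implicit Arguments.

Record group := Group {
  carrier :> Type;
  gmul : carrier -> carrier -> carrier;
  gone : carrier;
  ginv : carrier -> carrier;
  gmulA : forall x y z, gmul x (gmul y z) = gmul (gmul x y) z;
  gmul1g : forall x, gmul gone x = x;
  gmulg1 : forall x, gmul x gone = x;
  gmulVg : forall x, gmul (ginv x) x = gone;
  gmulgV : forall x, gmul x (ginv x) = gone
}.

Arguments gmul {g}.
Arguments gone {g}.
Arguments ginv {g}.

Definition is_hom (A B : group) (f : A -> B) : Prop :=
  forall x y : A, f (gmul x y) = gmul (f x) (f y).

Definition is_aut (H : group) (a : H -> H) : Prop :=
  @is_hom H H a /\ exists b : H -> H, (forall x, b (a x) = x) /\ (forall x, a (b x) = x).

Definition crossed_system {H G : group} (alpha : G -> H -> H) (f : G -> G -> H) : Prop :=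
  (forall g, @is_aut H (alpha g)) /\
  f gone gone = gone /\
  (forall (g1 g2 : G) (h : H),
      alpha g1 (alpha g2 h) = gmul (gmul (f g1 g2) (alpha (gmul g1 g2) h)) (ginv (f g1 g2))) /\
  (forall g1 g2 g3 : G,
      gmul (f g1 g2) (f (gmul g1 g2) g3) = gmul (alpha g1 (f g2 g3)) (f g1 (gmul g2 g3))).

Definition cp_mul {H G : group} (alpha : G -> H -> H) (f : G -> G -> H)
    (x y : H * G) : H * G :=
  let (h1, g1) := x in let (h2, g2) := y in
  (gmul (gmul h1 (alpha g1 h2)) (f g1 g2), gmul g1 g2).

Definition cp_hom {H G : group} (alpha : G -> H -> H) (f : G -> G -> H)
    (alpha' : G -> H -> H) (f' : G -> G -> H) (psi : H * G -> H * G) : Prop :=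
  forall x y, psi (cp_mul alpha f x y) = cp_mul alpha' f' (psi x) (psi y).

Definition admissible {H G : group} (alpha : G -> H -> H) (f : G -> G -> H)
    (alpha' : G -> H -> H) (f' : G -> G -> H)
    (u : H -> H) (r : G -> H) (v : G -> G) (s : H -> G) : Prop :=
  @is_hom H G s /\
  (forall g1 g2 : G, gmul (v g1) (v g2) = gmul (s (f g1 g2)) (v (gmul g1 g2))) /\
  (forall (g : G) (h : H), gmul (v g) (s h) = gmul (s (alpha g h)) (v g)) /\
  (forall h1 h2 : H,
      u (gmul h1 h2) = gmul (gmul (u h1) (alpha' (s h1) (u h2))) (f' (s h1) (s h2))) /\
  (forall (g : G) (h : H),
      gmul (gmul (u (alpha g h)) (alpha' (s (alpha g h)) (r g))) (f' (s (alpha g h)) (v g))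
      = gmul (gmul (r g) (alpha' (v g) (u h))) (f' (v g) (s h))) /\
  (forall g1 g2 : G,
      gmul (gmul (r g1) (alpha' (v g1) (r g2))) (f' (v g1) (v g2))
      = gmul (gmul (u (f g1 g2)) (alpha' (s (f g1 g2)) (r (gmul g1 g2))))
             (f' (s (f g1 g2)) (v (gmul g1 g2)))).

(* the map psi associated to (u,r,v,s):
   psi(h,g) = (u(h), s(h)) . (r(g), v(g)) in H #_alpha'^f' G *)
Definition psi_of {H G : group} (alpha' : G -> H -> H) (f' : G -> G -> H)
    (u : H -> H) (r : G -> H) (v : G -> G) (s : H -> G) (x : H * G) : H * G :=
  let (h, g) := x in
  (gmul (gmul (u h) (alpha' (s h) (r g))) (f' (s h) (v g)), gmul (s h) (v g)).

(* Main.v *)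
Require Import Defs.
Set Implicit Arguments.
Arguments gmulA {g}. Arguments gmul1g {g}. Arguments gmulg1 {g}.
Arguments gmulVg {g}. Arguments gmulgV {g}.

Section G.
Variable K : group.
Lemma cancel_l (a x y : K) : gmul a x = gmul a y -> x = y.
Proof. intro E. rewrite <- (gmul1g x), <- (gmul1g y), <- (gmulVg a), <- !gmulA, E. reflexivity. Qed.
Lemma cancel_r (a x y : K) : gmul x a = gmul y a -> x = y.
Proof. intro E. rewrite <- (gmulg1 x), <- (gmulg1 y), <- (gmulgV a), !gmulA, E. reflexivity. Qed.
Lemma idem1 (x : K) : gmul x x = x -> x = gone.
Proof. intro E. apply (cancel_l x). rewrite gmulg1. exact E. Qed.
Lemma idem1l (x y : K) : y = gmul x y -> x = gone.
Proof. intro E. apply (cancel_r y). rewrite gmul1g. symmetry; exact E. Qed.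
Lemma ginv1 : ginv (gone : K) = gone.
Proof. rewrite <- (gmul1g (ginv gone)). apply gmulgV. Qed.
End G.

Lemma hom_one (A B : group) (s : A -> B) : @is_hom A B s -> s gone = gone.
Proof. intro Hs. apply idem1. rewrite <- Hs, gmul1g. reflexivity. Qed.

Lemma aut_inj (K : group) (a : K -> K) : @is_aut K a -> forall x y, a x = a y -> x = y.
Proof. intros [_ [b [Hb _]]] x y E. rewrite <- (Hb x), <- (Hb y), E. reflexivity. Qed.

Section CS.
Variables (H G : group) (alpha : G -> H -> H) (f : G -> G -> H).
Hypothesis CS : crossed_system alpha f.

Lemma cs_a1 g : alpha g gone = gone.
Proof. destruct CS as [A _]. apply hom_one, A. Qed.
Lemma cs_hom g x y : alpha g (gmul x y) = gmul (alpha g x) (alpha g y).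
Proof. destruct CS as [A _]. apply (A g). Qed.
Lemma cs_f1l g : f gone g = gone.
Proof.
  destruct CS as [A [F11 [WA CC]]].
  pose proof (CC gone gone g) as E. rewrite !gmul1g, F11, !gmul1g in E.
  apply (aut_inj (A gone)). rewrite cs_a1. exact ((@idem1l _ _ _ E)).
Qed.
Lemma cs_1a h : alpha gone h = h.
Proof.
  destruct CS as [A [F11 [WA CC]]].
  pose proof (WA gone gone h) as E. rewrite !gmul1g, F11, !gmul1g, ginv1, gmulg1 in E.
  exact (aut_inj (A gone) _ _ E).
Qed.
Lemma cs_f1r g : f g gone = gone.
Proof.
  destruct CS as [A [F11 [WA CC]]].
  pose proof (CC g gone gone) as E. rewrite !gmulg1, F11, cs_a1, gmul1g in E.
  apply idem1; exact E.
Qed.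
Lemma cp_assoc x y z : cp_mul alpha f (cp_mul alpha f x y) z = cp_mul alpha f x (cp_mul alpha f y z).
Proof.
  destruct CS as [A [F11 [WA CC]]].
  destruct x as [h1 g1], y as [h2 g2], z as [h3 g3]. simpl.
  f_equal; [| symmetry; apply gmulA].
  rewrite !cs_hom, WA.
  rewrite <- !gmulA. f_equal. f_equal. f_equal.
  f_equal. rewrite <- CC, gmulA, gmulVg, gmul1g. reflexivity.
Qed.
End CS.

Lemma normalize (H G : group) (alpha : G -> H -> H) (f : G -> G -> H)
    (alpha' : G -> H -> H) (f' : G -> G -> H) u r v s :
  crossed_system alpha f -> crossed_system alpha' f' ->
  admissible alpha f alpha' f' u r v s ->
  s gone = gone /\ u gone = gone /\ v gone = gone /\ r gone = gone.
Proof.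
  intros CS CS' [Hs [Hi [Hii [Hiii [Hiv Hv]]]]].
  pose proof CS as [_ [F11 _]]. pose proof CS' as [_ [F11' _]].
  assert (S1 : s gone = gone) by (apply hom_one; exact Hs).
  assert (U1 : u gone = gone).
  { pose proof (Hiii gone gone) as E. rewrite gmul1g, S1, F11', gmulg1, (cs_1a CS') in E.
    apply idem1; symmetry; exact E. }
  assert (V1 : v gone = gone).
  { pose proof (Hi gone gone) as E. rewrite gmul1g, F11, S1, gmul1g in E.
    apply idem1; exact E. }
  split; [exact S1|split; [exact U1|split; [exact V1|]]].
  pose proof (Hv gone gone) as E. rewrite gmul1g, F11, S1, U1, V1, F11', !gmulg1, gmul1g in E.
  rewrite (cs_1a CS') in E. apply idem1. exact E.
Qed.

Theorem corollary2p3 (H G : group) (alpha : G -> H -> H) (f : G -> G -> H)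
    (alpha' : G -> H -> H) (f' : G -> G -> H) :
  crossed_system alpha f -> crossed_system alpha' f' ->
  (* well-defined: every admissible quadruple gives a homomorphism *)
  (forall u r v s, admissible alpha f alpha' f' u r v s ->
     cp_hom alpha f alpha' f' (psi_of alpha' f' u r v s)) /\
  (* surjective: every homomorphism arises this way *)
  (forall psi : H * G -> H * G, cp_hom alpha f alpha' f' psi ->
     exists u r v s, admissible alpha f alpha' f' u r v s /\
       forall x, psi x = psi_of alpha' f' u r v s x) /\
  (* injective *)
  (forall u r v s u0 r0 v0 s0,
     admissible alpha f alpha' f' u r v s ->
     admissible alpha f alpha' f' u0 r0 v0 s0 ->
     (forall x, psi_of alpha' f' u r v s x = psi_of alpha' f' u0 r0 v0 s0 x) ->
     (forall h, u h = u0 h) /\ (forall g, r g = r0 g) /\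
     (forall g, v g = v0 g) /\ (forall h, s h = s0 h)) /\
  (* normalization of admissible quadruples *)
  (forall u r v s, admissible alpha f alpha' f' u r v s ->
     u gone = gone /\ v gone = gone /\ r gone = gone).
Proof.
  intros CS CS'.
  set (m := cp_mul alpha' f').
  assert (MA : forall x y z, m (m x y) z = m x (m y z)) by (intros; apply (cp_assoc CS')).
  split; [|split; [|split]].
  - intros u r v s Ad.
    pose proof Ad as [Hs [Hi [Hii [Hiii [Hiv Hv]]]]].
    set (p1 := fun h => (u h, s h)). set (p2 := fun g => (r g, v g)).
    assert (D : forall h g, psi_of alpha' f' u r v s (h, g) = m (p1 h) (p2 g)) by reflexivity.
    assert (L1 : forall h1 h2, p1 (gmul h1 h2) = m (p1 h1) (p1 h2)).
    { intros. unfold p1, m; simpl. rewrite Hiii, Hs. reflexivity. }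
    assert (L2 : forall g1 g2, m (p2 g1) (p2 g2) = m (p1 (f g1 g2)) (p2 (gmul g1 g2))).
    { intros. unfold p1, p2, m; simpl. rewrite Hv, Hi. reflexivity. }
    assert (L3 : forall g h, m (p2 g) (p1 h) = m (p1 (alpha g h)) (p2 g)).
    { intros. unfold p1, p2, m; simpl. rewrite Hiv, Hii. reflexivity. }
    intros [h1 g1] [h2 g2]. simpl cp_mul at 1. rewrite !D. fold m.
    rewrite !L1, !MA, <- L2, <- (MA (p1 (alpha g1 h2))), <- L3, !MA. reflexivity.
  - intros psi Hpsi.
    pose proof CS as [_ [F11 _]].
    exists (fun h => fst (psi (h, gone))), (fun g => fst (psi (gone, g))),
           (fun g => snd (psi (gone, g))), (fun h => snd (psi (h, gone))).
    assert (Dec : forall h g, psi (h, g) = m (psi (h, gone)) (psi (gone, g))).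
    { intros. rewrite <- Hpsi. simpl. rewrite (cs_a1 CS), (cs_f1l CS), !gmulg1, gmul1g. reflexivity. }
    assert (E1 : forall h1 h2, psi (gmul h1 h2, gone) = m (psi (h1, gone)) (psi (h2, gone))).
    { intros. rewrite <- Hpsi. simpl. rewrite (cs_1a CS), F11, !gmulg1. reflexivity. }
    assert (E2 : forall g1 g2, m (psi (gone, g1)) (psi (gone, g2))
                  = m (psi (f g1 g2, gone)) (psi (gone, gmul g1 g2))).
    { intros. rewrite <- Hpsi, <- Dec. simpl. rewrite (cs_a1 CS), !gmul1g. reflexivity. }
    assert (E3 : forall g h, m (psi (gone, g)) (psi (h, gone))
                  = m (psi (alpha g h, gone)) (psi (gone, g))).
    { intros. rewrite <- Hpsi, <- Dec. simpl. rewrite (cs_f1r CS), !gmul1g, !gmulg1. reflexivity. }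
    split.
    + unfold admissible. split; [|split; [|split; [|split]]].
      * intros h1 h2. rewrite E1. destruct (psi (h1, gone)), (psi (h2, gone)). reflexivity.
      * intros g1 g2. pose proof (E2 g1 g2) as E.
        destruct (psi (gone, g1)), (psi (gone, g2)), (psi (f g1 g2, gone)), (psi (gone, gmul g1 g2)).
        simpl in *. injection E; auto.
      * intros g h. pose proof (E3 g h) as E.
        destruct (psi (gone, g)), (psi (h, gone)), (psi (alpha g h, gone)).
        simpl in *. injection E; auto.
      * intros h1 h2. rewrite E1. destruct (psi (h1, gone)), (psi (h2, gone)). reflexivity.
      * split.
        -- intros g h. pose proof (E3 g h) as E.
           destruct (psi (gone, g)), (psi (h, gone)), (psi (alpha g h, gone)).
           simpl in *. injection E; auto.
        -- intros g1 g2. pose proof (E2 g1 g2) as E.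
           destruct (psi (gone, g1)), (psi (gone, g2)), (psi (f g1 g2, gone)), (psi (gone, gmul g1 g2)).
           simpl in *. injection E; auto.
    + intros [h g]. rewrite Dec. unfold psi_of. cbn beta. destruct (psi (h, gone)), (psi (gone, g)). reflexivity.
  - intros u r v s u0 r0 v0 s0 Ad Ad0 Eq.
    destruct (normalize CS CS' Ad) as [S1 [U1 [V1 R1]]].
    destruct (normalize CS CS' Ad0) as [S1' [U1' [V1' R1']]].
    assert (P1 : forall h, psi_of alpha' f' u r v s (h, gone) = (u h, s h)).
    { intros. simpl. rewrite R1, V1, (cs_a1 CS'), (cs_f1r CS'), !gmulg1. reflexivity. }
    assert (P1' : forall h, psi_of alpha' f' u0 r0 v0 s0 (h, gone) = (u0 h, s0 h)).
    { intros. simpl. rewrite R1', V1', (cs_a1 CS'), (cs_f1r CS'), !gmulg1. reflexivity. }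
    assert (P2 : forall g, psi_of alpha' f' u r v s (gone, g) = (r g, v g)).
    { intros. simpl. rewrite U1, S1, (cs_1a CS'), (cs_f1l CS'), !gmul1g, gmulg1. reflexivity. }
    assert (P2' : forall g, psi_of alpha' f' u0 r0 v0 s0 (gone, g) = (r0 g, v0 g)).
    { intros. simpl. rewrite U1', S1', (cs_1a CS'), (cs_f1l CS'), !gmul1g, gmulg1. reflexivity. }
    repeat split; intros x.
    + pose proof (Eq (x, gone)) as E. rewrite P1, P1' in E. congruence.
    + pose proof (Eq (gone, x)) as E. rewrite P2, P2' in E. congruence.
    + pose proof (Eq (gone, x)) as E. rewrite P2, P2' in E. congruence.
    + pose proof (Eq (x, gone)) as E. rewrite P1, P1' in E. congruence.
  - intros u r v s Ad. destruct (normalize CS CS' Ad) as [_ [U1 [V1 R1]]]. auto.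
Qed.
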